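(* Let $A=\mathbb Q[x_1,x_2,\dots]$ be the polynomial algebra graded by $\deg x_n=n$, and let $d:A\to A$ be the derivation with $d x_n=x_{n-1}$ for $n\ge2$ and $d x_1=0$ (so $d$ lowers degree by $1$). Then every element of $A$ of positive degree lies in the image of $d$.
   Context: Equivalently, in terms of $s_n=n!\,x_n$ (the universal power sums in the rational cohomology of the index-zero Fredholm operators), $d s_n=n s_{n-1}$ for $n\ge2$ and $d s_1=0$. *)

(* Defs.v *)
From HB Require Import structures.
From mathcomp Require Import all_boot all_order all_algebra.
From mathcomp Require Import multinomials.mpoly.
Set Implicit Arguments. Unset Strict Implicit. Unset Printing Implicit Defensive.
Import GRing.Theory.
Local Open Scope ring_scope.

(* Model of A = Q[x_1, x_2, ...]:  A is the increasing union of the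
   finite polynomial rings {mpoly rat[N]}, where the variable 'X_i
   (i : 'I_N) stands for x_{i+1}.  Every element of A lives in some
   {mpoly rat[N]}, and {mpoly rat[N]} embeds into {mpoly rat[N + m]}. *)

Definition embed (n m : nat) (p : {mpoly rat[n]}) : {mpoly rat[n + m]} :=
  mmap (@mpolyC _ _) (fun i : 'I_n => 'X_(lshift m i)) p.

(* The derivation d with d x_{i+1} = x_i (i >= 1) and d x_1 = 0, i.e.
   d = sum_i d(x_i) * d/dx_i, restricted to Q[x_1..x_N] (which it
   preserves); these restrictions are compatible with [embed]. *)
Definition dA (N : nat) (p : {mpoly rat[N]}) : {mpoly rat[N]} :=
  \sum_(i < N) \sum_(j < N | j.+1 == i :> nat) mderiv i p * 'X_j.

(* Grading deg x_{i+1} = i+1: the library's weight measure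
   mnmwgt m = sum_i m_i * (i+1).  [wdeg_homog k p] : p is homogeneous
   of degree k for this grading. *)
Definition wdeg_homog (N k : nat) (p : {mpoly rat[N]}) : bool :=
  p \is ishomog1 k (Measure.clone _ (@mnmwgt N) _).

(* Main.v *)
Require Import Defs.
From HB Require Import structures.
From mathcomp Require Import all_boot all_order all_algebra.
From mathcomp Require Import multinomials.mpoly.
From mathcomp Require Import zify.
Local Open Scope ring_scope.
Import GRing.Theory.

Section Aux.

Lemma dA0 N : @dA N 0 = 0.
Proof. by rewrite /dA big1 // => i _; rewrite big1 // => j _; rewrite mderiv0 mul0r. Qed.

Lemma dA_add N (p q : {mpoly rat[N]}) : dA (p + q) = dA p + dA q.
Proof.
rewrite /dA -big_split; apply: eq_bigr => i _ /=.
by rewrite -big_split; apply: eq_bigr => j _; rewrite mderivD mulrDl.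
Qed.

Lemma dA_scale N c (p : {mpoly rat[N]}) : dA (c *: p) = c *: dA p.
Proof.
rewrite /dA scaler_sumr; apply: eq_bigr => i _ /=.
by rewrite scaler_sumr; apply: eq_bigr => j _; rewrite mderivZ scalerAl.
Qed.

Lemma dA_opp N (p : {mpoly rat[N]}) : dA (- p) = - dA p.
Proof. by rewrite -scaleN1r dA_scale scaleN1r. Qed.

Lemma dA_sub N (p q : {mpoly rat[N]}) : dA (p - q) = dA p - dA q.
Proof. by rewrite dA_add dA_opp. Qed.

Lemma dA_mul N (p q : {mpoly rat[N]}) : dA (p * q) = dA p * q + p * dA q.
Proof.
rewrite /dA mulr_suml mulr_sumr -big_split; apply: eq_bigr => i _ /=.
rewrite mulr_suml mulr_sumr -big_split; apply: eq_bigr => j _ /=.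
by rewrite mderivM mulrDl mulrAC mulrA.
Qed.

Lemma dA_sum N (s : seq 'X_{1..N}) (F : 'X_{1..N} -> {mpoly rat[N]}) :
  dA (\sum_(x <- s) F x) = \sum_(x <- s) dA (F x).
Proof.
elim: s => [|x s IH]; first by rewrite !big_nil dA0.
by rewrite !big_cons dA_add IH.
Qed.

Lemma dA_XS N (j l : 'I_N) : l = j.+1 :> nat -> dA 'X_l = 'X_j.
Proof.
move=> hl; rewrite /dA (bigD1 l) //=.
rewrite [X in _ + X]big1 ?addr0; last first.
  move=> i hi; rewrite big1 // => x _.
  by rewrite mderivX mnm1E eq_sym (negbTE hi) scale0r mul0r.
have -> : ('X_l : {mpoly rat[N]})^`M(l) = 1.
  rewrite mderivX mnm1E eqxx.
  have -> : (U_(l) - U_(l))%MM = 0%MM by apply/mnmP => x; rewrite mnmBE mnm0E subnn.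
  by rewrite mpolyX0 scale1r.
rewrite (big_pred1 j) ?mul1r // => x /=.
by rewrite hl eqSS.
Qed.


Lemma wgt_split N (mm : 'X_{1..N}) (i : 'I_N) : mm i != 0%N ->
  mnmwgt mm = (mnmwgt (mm - U_(i))%MM + i.+1)%N /\ 'X_[mm] = ('X_i : {mpoly rat[N]}) * 'X_[mm - U_(i)].
Proof.
move=> hi; have e : (mm - U_(i) + U_(i))%MM = mm by apply: submK; rewrite lep1mP.
split; first by rewrite -{1}e mnmwgtD mnmwgt1.
by rewrite -mpolyXD addmC e.
Qed.

Lemma dA_X_homog N (mm : 'X_{1..N}) :
  wdeg_homog (mnmwgt mm).-1 (dA 'X_[mm]) /\ (mnmwgt mm = 0%N -> dA 'X_[mm] = 0).
Proof.
have key : forall i : 'I_N, mm i = 0%N \/ (mm i != 0%N /\ mnmwgt mm = (mnmwgt (mm - U_(i))%MM + i.+1)%N).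
  move=> i; case: (eqVneq (mm i) 0%N) => h; [by left | right; split => //].
  by case: (@wgt_split N mm i h).
split.
  rewrite /wdeg_homog /dA; apply: rpred_sum => i _; apply: rpred_sum => j /eqP hj.
  rewrite mderivX; case: (key i) => [->|[hi hw]]; first by rewrite scale0r mul0r rpred0.
  rewrite -scalerAl; apply: rpredZ.
  rewrite -mpolyXD dhomogX; change (mnmwgt (mm - U_(i) + U_(j))%MM == (mnmwgt mm).-1).
  rewrite mnmwgtD mnmwgt1 hw -hj; apply/eqP; lia.
move=> h0; rewrite /dA big1 // => i _; rewrite big1 // => j _.
rewrite mderivX; case: (key i) => [->|[hi hw]]; first by rewrite scale0r mul0r.
move: hw; rewrite h0; lia.
Qed.

Lemma dA_expand N (u : {mpoly rat[N]}) :
  dA u = \sum_(mm <- msupp u) u@_mm *: dA 'X_[mm].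
Proof.
rewrite {1}(mpolyE u) dA_sum; apply: eq_bigr => mm _; by rewrite dA_scale.
Qed.

Lemma dA_homog N w (u : {mpoly rat[N]}) : wdeg_homog w.+1 u -> wdeg_homog w (dA u).
Proof.
move=> /dhomogP hu; rewrite dA_expand /wdeg_homog big_seq; apply: rpred_sum => mm hmm.
apply: rpredZ; have [h _] := @dA_X_homog N mm.
have hw : mnmwgt mm = w.+1 by apply: hu.
by rewrite hw in h.
Qed.

Lemma dA_nil N w (u : {mpoly rat[N]}) : wdeg_homog w u -> iter w.+1 (@dA N) u = 0.
Proof.
elim: w u => [|w IH] u hu.
  rewrite /= dA_expand big_seq big1 // => mm hmm.
  have [_ h] := @dA_X_homog N mm; rewrite h ?scaler0 //.
  by move/dhomogP: hu => /(_ mm hmm).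
by rewrite iterSr; apply: IH; apply: dA_homog.
Qed.


Lemma keyK N t : forall (u : {mpoly rat[N]}) (j : 'I_N),
  iter t (@dA N) u = 0 -> (j + t < N)%N -> exists w, dA w = 'X_j * u.
Proof.
elim: t => [|t IH] u j /= hu hj.
  by exists 0; rewrite hu mulr0 dA0.
have hj1 : (j.+1 < N)%N by lia.
pose j1 : 'I_N := Ordinal hj1.
have [w hw] : exists w, dA w = 'X_j1 * dA u.
  apply: IH; first by rewrite -iterSr.
  rewrite /=; lia.
exists ('X_j1 * u - w); rewrite dA_sub dA_mul hw (@dA_XS N j j1) //.
by rewrite addrK.
Qed.

Lemma sum_img N (s : seq 'X_{1..N}) (F : 'X_{1..N} -> {mpoly rat[N]}) :
  (forall x, x \in s -> exists r, dA r = F x) -> exists r, dA r = \sum_(x <- s) F x.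
Proof.
elim: s => [|x s IH] h; first by exists 0; rewrite big_nil dA0.
have [r1 h1] := h x (mem_head _ _).
have [r2 h2] : exists r, dA r = \sum_(x <- s) F x.
  by apply: IH => y hy; apply: h; rewrite inE hy orbT.
by exists (r1 + r2); rewrite big_cons dA_add h1 h2.
Qed.

Lemma mainN N w (q : {mpoly rat[N]}) : (0 < w)%N -> (w < N)%N -> wdeg_homog w q ->
  exists r, dA r = q.
Proof.
move=> w0 wN /dhomogP hq; rewrite (mpolyE q); apply: sum_img => mm hmm.
have hw : mnmwgt mm = w by apply: hq.
case: (pickP (fun i : 'I_N => mm i != 0%N)) => [i hi | h0]; last first.
  move: hw; rewrite /mnmwgt big1 => [e|i _]; first by move: w0; rewrite -e.
  by move: (h0 i) => /negbFE/eqP ->.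
have [hw2 hX] := @wgt_split N mm i hi.
have hh : wdeg_homog (mnmwgt (mm - U_(i))%MM) ('X_[mm - U_(i)] : {mpoly rat[N]}).
  by rewrite /wdeg_homog dhomogX.
have hn := @dA_nil N _ _ hh.
have [r hr] := @keyK N _ _ i hn ltac:(lia).
by exists (q@_mm *: r); rewrite dA_scale hr hX.
Qed.

End Aux.

Lemma embed_homog n m k (p : {mpoly rat[n]}) : wdeg_homog k p -> wdeg_homog k (embed m p).
Proof.
move=> /dhomogP hp; rewrite /embed /mmap /wdeg_homog big_seq.
apply: rpred_sum => mm hmm; rewrite mul_mpolyC; apply: rpredZ.
have hw : mnmwgt mm = k by apply: hp.
rewrite -hw /mmap1 /mnmwgt.
apply: (big_rec2 (fun w (q : {mpoly rat[n + m]}) =>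
   q \is ishomog1 w (Measure.clone _ (@mnmwgt (n + m)) _))).
  exact: dhomog1.
move=> i w q _ hq; apply: dhomogM => //.
rewrite mulnC; apply: dhomogMn; rewrite dhomogX.
by change (mnmwgt (U_(lshift m i))%MM == i.+1); rewrite mnmwgt1.
Qed.

Theorem lemma8p4 (n k : nat) (p : {mpoly rat[n]}) :
  (0 < k)%N -> wdeg_homog k p ->
  exists (m : nat) (q : {mpoly rat[n + m]}), dA q = embed m p.
Proof.
move=> k0 hp; exists k.+1.
apply: (@mainN (n + k.+1) k) => //; first lia.
exact: embed_homog.
Qed.
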